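(* Let $d\ge3$, $\{\mathbb{P}^u\}$ satisfy (P1), (P2), (D), (S1), (S2), fix $u$, $\eta=\eta(u)$. Let $\alpha\in(0,1/3)$, let $\omega$ be such that $\mathcal S_\infty$ is nonempty and connected and $R_{\mathrm{den}}(\omega,\alpha)<\infty$, and let $U_0\subseteq\mathcal S_\infty$. Let integers $\ell>\ell'$ satisfy $2^{\ell}>2^{\ell'}\ge R_{\mathrm{den}}(\omega,\alpha)$ and $r_{\alpha,2^{\ell'}}-2^\ell-2^{\ell'}>0$. (i) For any $x,x+y\in\mathcal S_\infty\cap B(0,r_{\alpha,2^\ell})$ connected by a path in $\mathcal S_\infty\cap B(0,r_{\alpha,2^\ell})$, $|\sigma^\omega_\ell(x)-\sigma^\omega_\ell(x+y)|\le c_{\mathrm{lip}}\widehat d_\omega(x,x+y)$ with $c_{\mathrm{lip}}=6\cdot2^{-\ell}/\eta$, where $\widehat d_\omega$ is the graph distance in $\mathcal S_\infty\cap B(0,r_{\alpha,2^\ell})$. (ii) For $x\in\mathcal S_\infty\cap B(0,r_{\alpha,2^{\ell'}}-2^\ell-2^{\ell'})$, $$(\sigma^\omega_{\ell'})^\omega_{x,\ell}\in\Big[\tfrac{1-\alpha}{1+\alpha}\sigma^\omega_\ell(x)-c_02^{\ell'-\ell},\ \tfrac{1+\alpha}{1-\alpha}\sigma^\omega_\ell(x)+c_02^{\ell'-\ell}\Big],\qquad c_0=\frac{3d\cdot2^{d-1}}{\eta}.$$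
   Context: Framework: $\Omega=\{0,1\}^{\mathbb{Z}^d}$; $\mathcal S=\{x:\omega(x)=1\}$ as nearest-neighbour subgraph; $\mathcal S_\infty$ vertices in infinite components; $B(x,r)$ closed $\ell^\infty$-ball in $\mathbb{Z}^d$. $\mathbb{P}^u$ satisfy (P1) ergodicity of shifts, (P2) monotonicity, (D) sprinkled decoupling $\mathbb{P}^u[A_1\cap A_2]\le\mathbb{P}^{u'}[A_1]\mathbb{P}^{u'}[A_2]+C\exp(-c\min\{(u'-u)^\beta s^\gamma,e^{(\log L)^\zeta}\})$ for increasing events depending on $B(x_i,L)$, $|x_1-x_2|_\infty=sL$, $u<u'$ (and reversed for decreasing events), (S1) local uniqueness with rate $f_S(u,R)\ge(\log R)^{1+\Delta_S(u)}$ (for large $R$; the events $\{\mathcal S_R\cap B(0,R)\ne\emptyset\}$ and $\{$all $x,y$ in $\mathcal S_{R/10}\cap B(0,R)$ connected in $\mathcal S\cap B(0,2R)\}$ have probability $\ge1-e^{-f_S(u,R)}$, $\mathcal S_r$ = vertices in components of $\ell^1$-diameter $\ge r$), (S2) $\eta(u)=\mathbb{P}^u[0\in\mathcal S_\infty]>0$ continuous. $\Delta_S=\Delta_S(u)$. Scales: $r_{\alpha,R}=\exp(\kappa_{\mathrm{reg}}(\alpha)(\log R)^{1+\Delta_S})$ with $\kappa_{\mathrm{reg}}(\alpha)>0$ a fixed function of $\alpha$ (namely $\frac1{2d}(\kappa_{d2}(\alpha)\wedge c_{hk6})$ for the volume large-deviation exponent $\kappa_{d2}$ and heat-kernel tail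 constant $c_{hk6}$). $R_{\mathrm{den}}(\omega,\alpha)=\inf\{R_0\ge1:\forall R\ge R_0,\forall x\in\mathcal S_\infty\cap B(0,r_{\alpha,R}),\ (1-\alpha)\eta\le|\mathcal S_\infty\cap B(x,R)|/|B(x,R)|\le(1+\alpha)\eta\}$. Densities: $U_1=\mathcal S_\infty\setminus U_0$; $\sigma^\omega_\ell(x)=|B(x,2^\ell)\cap U_1|/|B(x,2^\ell)\cap\mathcal S_\infty|$ for $x\in\mathbb{Z}^d$; for $f:\mathbb{Z}^d\to\mathbb{R}$, $(f)^\omega_{x,\ell}=|B(x,2^\ell)\cap\mathcal S_\infty|^{-1}\sum_{y\in B(x,2^\ell)\cap\mathcal S_\infty}f(y)$; convention $0/0=0$. *)

(* Defs.v *)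
From HB Require Import structures.
From mathcomp Require Import all_boot all_order all_algebra.
From mathcomp Require Import all_classical all_reals all_analysis.
From mathcomp Require Import finmap.
Set Implicit Arguments. Unset Strict Implicit. Unset Printing Implicit Defensive.
Import Order.TTheory GRing.Theory Num.Theory.
Local Open Scope classical_set_scope.
Local Open Scope ring_scope.

Definition pt (d : nat) := 'rV[int]_d.

Definition normi d (x : pt d) : nat := \max_(i < d) absz (x ord0 i).

Definition lball {R : realType} d (x : pt d) (r : R) : set (pt d) :=
  [set y | ((normi (y - x))%:R <= r)%R].

Definition adj d (x y : pt d) : bool := (\sum_(i < d) absz (x ord0 i - y ord0 i) == 1)%N.

Definition walk d (A : set (pt d)) (x y : pt d) (n : nat) : Prop :=
  exists p : seq (pt d), [/\ size p = n, path (@adj d) x p, last x p = y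
                           & forall z, z \in x :: p -> A z].

Definition connected_in d (A : set (pt d)) (x y : pt d) : Prop :=
  exists n, walk A x y n.

(** graph distance in the subgraph induced by A (+oo if not connected) *)
Definition gdist {R : realType} d (A : set (pt d)) (x y : pt d) : \bar R :=
  ereal_inf [set (n%:R)%:E | n in [set n | walk A x y n]].

Definition config d := pt d -> bool.

Definition Sset d (om : config d) : set (pt d) := [set x | om x].

Definition Sinf d (om : config d) : set (pt d) :=
  [set x | om x /\ ~ finite_set [set y | connected_in (Sset om) x y]].

(** cardinality of a finite set (0 if infinite; only used on finite sets) *)
Definition cardS d (A : set (pt d)) : nat := (#|` fset_set A|)%fset.

(** scale r_{alpha,R} = exp(kappa (log R)^{1+Delta}), with kappa = kappa_reg(alpha) *)
Definition rscale {R : realType} (kappa Delta : R) (Rr : R) : R :=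
  expR (kappa * (ln Rr) `^ (1 + Delta)).

Definition dens_good {R : realType} d (om : config d) (eta alpha kappa Delta : R)
    (Rr : R) : Prop :=
  forall x, Sinf om x -> lball 0 (rscale kappa Delta Rr) x ->
    (1 - alpha) * eta <= (cardS (Sinf om `&` lball x Rr))%:R / (cardS (lball x Rr))%:R
    <= (1 + alpha) * eta.

(** R_den(omega, alpha) in \bar R (+oo if the set is empty) *)
Definition Rden {R : realType} d (om : config d) (eta alpha kappa Delta : R) : \bar R :=
  ereal_inf [set R0%:E | R0 in
     [set R0 : R | 1 <= R0 /\ forall Rr, R0 <= Rr -> dens_good om eta alpha kappa Delta Rr]].

Definition U1 d (om : config d) (U0 : set (pt d)) : set (pt d) := Sinf om `\` U0.

(** sigma^omega_l(x) (convention 0/0 = 0, automatic in MathComp) *)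
Definition sigma {R : realType} d (om : config d) (U0 : set (pt d)) (l : nat) (x : pt d) : R :=
  (cardS (lball x (2 ^+ l : R) `&` U1 om U0))%:R / (cardS (lball x (2 ^+ l : R) `&` Sinf om))%:R.

Definition avg {R : realType} d (om : config d) (f : pt d -> R) (x : pt d) (l : nat) : R :=
  (\sum_(y \in lball x (2 ^+ l : R) `&` Sinf om) f y) / (cardS (lball x (2 ^+ l : R) `&` Sinf om))%:R.

(* Main.v *)
Require Import Defs.
From HB Require Import structures.
From mathcomp Require Import all_boot all_order all_algebra.
From mathcomp Require Import all_classical all_reals all_analysis.
From mathcomp Require Import finmap zify.
From mathcomp.algebra_tactics Require Import ring lra.
Import Order.TTheory GRing.Theory Num.Theory.
Local Open Scope classical_set_scope.
Local Open Scope ring_scope.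

Section Box.
Variable d : nat.
Definition Tb (M : nat) := {ffun 'I_d -> 'I_(M.*2.+1)}.
Definition pb (c : pt d) (M : nat) (g : Tb M) : pt d :=
  c + \row_i (((g i : nat)%:Z - M%:Z)%R).

Set Implicit Arguments. Unset Strict Implicit. Unset Printing Implicit Defensive.

Lemma pbE c M g i : pb c M g ord0 i = c ord0 i + ((g i : nat)%:Z - M%:Z).
Proof. by rewrite /pb !mxE. Qed.

Lemma normi_leP (x : pt d) M :
  (normi x <= M)%N <-> forall i, (absz (x ord0 i) <= M)%N.
Proof.
split.
  by move=> /bigmax_leqP H i; apply: H.
by move=> H; apply/bigmax_leqP => i _; apply: H.
Qed.

Lemma normi_ge (x : pt d) i : (absz (x ord0 i) <= normi x)%N.
Proof. by rewrite /normi; apply: (leq_bigmax i). Qed.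

Lemma lballP {R : realType} (c : pt d) (M : nat) y :
  lball c (M%:R : R) y <-> forall i, (absz (y ord0 i - c ord0 i) <= M)%N.
Proof.
rewrite /lball /= ler_nat; split.
  by move=> /normi_leP H i; have := H i; rewrite !mxE.
by move=> H; apply/normi_leP => i; rewrite !mxE.
Qed.

Lemma pb_in {R : realType} (c : pt d) M g : lball c (M%:R : R) (pb c M g).
Proof.
apply/lballP => i; rewrite pbE.
have := ltn_ord (g i); lia.
Qed.

Lemma pb_inj c M : injective (pb c M).
Proof.
move=> g g' /matrixP H; apply/ffunP => i; apply: val_inj => /=.
have := H ord0 i; rewrite !mxE; lia.
Qed.

Lemma pb_surj {R : realType} (c : pt d) M y : lball c (M%:R : R) y -> exists g, y = pb c M g.
Proof.
move=> /lballP H.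
have Hi i : (absz (y ord0 i - c ord0 i + M%:Z)%R < M.*2.+1)%N.
  have := H i; lia.
exists [ffun i => Ordinal (Hi i)]; apply/matrixP => a i.
have -> : a = ord0 by apply: val_inj; case: a => [[|]]. rewrite pbE ffunE /=. have := H i; lia.
Qed.

Lemma lball_image {R : realType} (c : pt d) M :
  lball c (M%:R : R) = pb c M @` setT.
Proof.
apply/seteqP; split => y.
  by move=> /pb_surj [g ->]; exists g.
by move=> [g _ <-]; apply: pb_in.
Qed.

Lemma lball_finite {R : realType} (c : pt d) M : finite_set (lball c (M%:R : R)).
Proof. by rewrite lball_image; apply: finite_image; apply: finite_finset. Qed.

Lemma fsum_box {R : realType} {V : Type} (idx : V) (op : Monoid.com_law idx)
   (c : pt d) M (A : set (pt d)) (F : pt d -> V) :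
  A `<=` lball c (M%:R : R) ->
  \big[op/idx]_(y \in A) F y = \big[op/idx]_(g : Tb M | pb c M g \in A) F (pb c M g).
Proof.
move=> AB.
have E : A = pb c M @` [set g | pb c M g \in A].
  apply/seteqP; split => y.
    move=> Ay; have [g Hg] := @pb_surj R c M y (AB _ Ay).
    by exists g => //=; rewrite -Hg; apply/mem_set.
  by move=> [g /= /set_mem + <-].
rewrite {1}E.
rewrite fsbig_image; last by move=> a b _ _; apply: pb_inj.
rewrite -(bigfs _ _ (r := index_enum (Tb M)) (P := fun g => pb c M g \in A)) //; first by rewrite index_enum_uniq.
by move=> i _; rewrite mem_index_enum.
Qed.


Lemma cardS_box {R : realType} (c : pt d) M (A : set (pt d)) :
  A `<=` lball c (M%:R : R) ->
  cardS A = (\sum_(g : Tb M) (pb c M g \in A : nat))%N.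
Proof.
move=> AB.
have fA : finite_set A := sub_finite_set AB (lball_finite c M).
rewrite /cardS card_fset_sum1 -fsbig_finite // (fsum_box _ _ AB).
by rewrite big_mkcond /=; apply: eq_bigr => g _; case: (_ \in _).
Qed.

Lemma cardS_le {R : realType} (c : pt d) M (A B : set (pt d)) :
  B `<=` lball c (M%:R : R) -> A `<=` B -> (cardS A <= cardS B)%N.
Proof.
move=> BB AB; rewrite (cardS_box (subset_trans AB BB)) (cardS_box BB).
apply: leq_sum => g _.
case: (boolP (pb c M g \in A)) => // /set_mem /AB /mem_set ->//.
Qed.

Lemma cardS_shell {R : realType} (c : pt d) M (P1 P2 U : set (pt d)) :
  P2 `<=` lball c (M%:R : R) -> P1 `<=` P2 ->
  (cardS (P2 `&` U) + cardS P1 <= cardS (P1 `&` U) + cardS P2)%N.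
Proof.
move=> PB P12.
have h1 : P2 `&` U `<=` lball c (M%:R : R) by move=> y [/PB].
have h2 : P1 `&` U `<=` lball c (M%:R : R) by move=> y [/P12/PB].
rewrite (cardS_box h1) (cardS_box h2) (cardS_box PB) (cardS_box (subset_trans P12 PB)).
rewrite -!big_split /=; apply: leq_sum => g _; rewrite !in_setI.
case: (boolP (pb c M g \in P1)) => [/set_mem /P12 /mem_set -> | _].
  by case: (_ \in U).
by case: (_ \in P2); case: (_ \in U).
Qed.

Lemma cardS_ball {R : realType} (c : pt d) M :
  cardS (lball c (M%:R : R)) = (M.*2.+1 ^ d)%N.
Proof.
rewrite (cardS_box (@subset_refl _ (lball c (M%:R : R)))).
rewrite (eq_bigr (fun _ => 1%N)); last by move=> g _; rewrite (mem_set (pb_in (R:=R) _ _)).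
by rewrite sum1_card card_ffun !card_ord.
Qed.


Lemma adj_split (u v : pt d) : adj u v ->
  exists i, absz (u ord0 i - v ord0 i) = 1%N /\ forall j, j != i -> u ord0 j = v ord0 j.
Proof.
move=> /eqP H.
have [i Hi] : exists i, absz (u ord0 i - v ord0 i) != 0%N.
  apply/existsP; apply: contraT; rewrite negb_exists => /forallP H0.
  move: H; rewrite big1 // => j _; by have := H0 j; rewrite negbK => /eqP.
exists i; move: H; rewrite (bigD1 i) //=.
set a := absz _; set b := (\sum_(_ < _ | _) _)%N => H.
have a1 : a = 1%N by move: Hi H; lia.
have b0 : b = 0%N by move: a1 H; lia.
split => // j Hj; move/eqP: b0; rewrite /b sum_nat_eq0 => /forallP/(_ j).
rewrite Hj /= => /eqP; lia.
Qed.

Lemma card_slice M i k : (k < M.*2.+1)%N ->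
  #|[pred g : Tb M | (g i : nat) == k]| = (M.*2.+1 ^ d.-1)%N.
Proof.
move=> kM.
pose F := fun j : 'I_d => if j == i then [pred t : 'I_(M.*2.+1) | (t : nat) == k]
                         else predT.
have -> : #|[pred g : Tb M | (g i : nat) == k]| = #|(family F : simpl_pred (Tb M))|.
  apply: eq_card => g; rewrite !inE; apply/idP/familyP.
    move=> /eqP Hg j; rewrite /F; case: eqP => [-> | _] //=.
    by rewrite inE Hg.
  by move=> /(_ i); rewrite /F eqxx inE.
rewrite card_family foldrE big_map big_enum /= (bigD1 i) //= {1}/F eqxx.
have -> : #|[pred t : 'I_(M.*2.+1) | (t : nat) == k]| = 1%N.
  rewrite -(card1 (Ordinal kM)); apply: eq_card => t; rewrite !inE.
  by apply/eqP/eqP => [H | ->] //; apply: val_inj.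
rewrite mul1n (eq_bigr (fun _ => M.*2.+1)); last first.
  move=> j /negbTE Hj; rewrite /F Hj; apply: etrans (card_ord M.*2.+1).
  by apply: eq_card.
rewrite (eq_bigl (mem (predC1 i))) // prod_nat_const cardC1 card_ord //.
Qed.

Lemma slab {R : realType} (u v : pt d) M (P : set (pt d)) : adj u v ->
  (cardS (lball u (M%:R : R) `&` P) <= cardS (lball v (M%:R : R) `&` P) + M.*2.+1 ^ d.-1)%N.
Proof.
move=> /adj_split [i [Hi Hj]].
pose k := if u ord0 i - v ord0 i == 1 then M.*2 else 0%N.
have kM : (k < M.*2.+1)%N by rewrite /k; case: ifP.
have geo g : ~ lball v (M%:R : R) (pb u M g) -> (g i : nat) = k.
  apply: contra_notP => Hk; apply/lballP => j; rewrite pbE.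
  have := ltn_ord (g j).
  case: (eqVneq j i) => [-> | /Hj ->]; last by lia.
  move: Hk Hi; rewrite /k; case: eqP; lia.
have h1 : lball u (M%:R : R) `&` P `<=` lball u (M%:R : R) by move=> y [].
have h2 : lball v (M%:R : R) `&` P `<=` lball v (M%:R : R) by move=> y [].
have h3 : (lball u (M%:R : R) `&` P) `&` lball v (M%:R : R) `<=` lball u (M%:R : R)
  by move=> y [[]].
apply: (@leq_trans (cardS ((lball u (M%:R : R) `&` P) `&` lball v (M%:R : R)) + M.*2.+1 ^ d.-1)%N); last first.
  rewrite leq_add2r; apply: (cardS_le h2) => y [[_ Py] Hv]; by split.
rewrite (cardS_box h1) (cardS_box h3) -(card_slice i kM) -sum1_card.
rewrite [X in (_ <= _ + X)%N]big_mkcond /= -big_split /=.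
apply: leq_sum => g _; rewrite !in_setI.
case: (boolP (pb u M g \in lball v (M%:R : R))) => [_ | Hv].
  by rewrite andbT leq_addr.
rewrite andbF add0n inE (geo g); first by rewrite eqxx; case: (_ && _).
by move=> /mem_set; apply/negP.
Qed.

End Box.
Arguments pb {d} c M g.

Section Sums.
Variable (d : nat) (R : realType).
Implicit Types (c x y z : pt d) (A B : set (pt d)).

Lemma normiN (a : pt d) : normi (- a) = normi a.
Proof. by apply: eq_bigr => i _; rewrite mxE abszN. Qed.

Lemma normiD (a b : pt d) : (normi (a + b)%R <= normi a + normi b)%N.
Proof.
apply/normi_leP => i; rewrite mxE.
have := normi_ge a i; have := normi_ge b i; move: (normi a) (normi b) (a ord0 i) (b ord0 i) => na nb ai bi; lia.
Qed.

Lemma lball_sym c (r : R) y : lball c r y -> lball y r c.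
Proof. by rewrite /lball /= -normiN opprB. Qed.

Lemma lball_trans c y z (r1 r2 : R) :
  lball c r1 y -> lball y r2 z -> lball c (r1 + r2) z.
Proof.
rewrite /lball /= => H1 H2.
have -> : z - c = (z - y) + (y - c) by rewrite addrA subrK.
apply: le_trans (_ : ((normi (z - y))%:R + (normi (y - c))%:R <= _)).
  by rewrite -natrD ler_nat normiD.
by rewrite addrC lerD.
Qed.

Lemma cardS_boxR c M A : A `<=` lball c (M%:R : R) ->
  ((cardS A)%:R : R) = \sum_(g : Tb d M | pb c M g \in A) 1.
Proof.
move=> AB; rewrite (cardS_box AB) natr_sum [RHS]big_mkcond /=.
by apply: eq_bigr => g _; case: (_ \in _).
Qed.

Lemma fs_le c M A (f g : pt d -> R) : A `<=` lball c (M%:R : R) ->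
  (forall y, A y -> f y <= g y) -> \sum_(y \in A) f y <= \sum_(y \in A) g y.
Proof.
move=> AB H; rewrite !(fsum_box _ _ AB); apply: ler_sum => h /set_mem; exact: H.
Qed.

Lemma fs_const c M A (k : R) : A `<=` lball c (M%:R : R) ->
  \sum_(y \in A) k = k * (cardS A)%:R.
Proof.
move=> AB; rewrite (fsum_box _ _ AB) (cardS_boxR AB) mulr_sumr.
by apply: eq_bigr => g _; rewrite mulr1.
Qed.

Lemma fs_sub c M A B (f : pt d -> R) : A `<=` lball c (M%:R : R) -> B `<=` A ->
  (forall y, A y -> 0 <= f y) -> \sum_(y \in B) f y <= \sum_(y \in A) f y.
Proof.
move=> AB BA H; rewrite (fsum_box _ _ AB) (fsum_box _ _ (subset_trans BA AB)).
rewrite big_mkcond [X in _ <= X]big_mkcond /=; apply: ler_sum => g _.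
case: (boolP (pb c M g \in B)) => [/set_mem /BA /mem_set -> // | _].
by case: (boolP (pb c M g \in A)) => // /set_mem /H.
Qed.


Lemma lball_symb c (r : R) y : (y \in lball c r) = (c \in lball y r).
Proof.
by apply/idP/idP => /set_mem /lball_sym /mem_set.
Qed.

Lemma if_sum (I : finType) (b : bool) (F : I -> R) :
  (if b then \sum_i F i else 0) = \sum_i (if b then F i else 0).
Proof. by case: b => //; rewrite big1. Qed.

Lemma dc x (L L' : nat) D U : D `<=` lball x (L%:R : R) ->
  \sum_(y \in D) ((cardS (lball y (L'%:R : R) `&` U))%:R : R)
  = \sum_(z \in lball x ((L + L')%:R : R) `&` U) ((cardS (D `&` lball z (L'%:R : R)))%:R : R).
Proof.
move=> DB.
have sub1 y : D y -> lball y (L'%:R : R) `&` U `<=` lball x ((L + L')%:R : R).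
  move=> Dy z [Hz _]; rewrite natrD; exact: lball_trans (DB _ Dy) Hz.
have sub2 : lball x ((L + L')%:R : R) `&` U `<=` lball x ((L + L')%:R : R)
  by move=> z [].
have sub3 z : D `&` lball z (L'%:R : R) `<=` lball x (L%:R : R) by move=> y [/DB].
rewrite (fsum_box _ _ DB) (fsum_box _ _ sub2).
rewrite (eq_bigr (fun g => \sum_(h : Tb d (L + L') | pb x (L + L') h \in lball (pb x L g) (L'%:R : R) `&` U) 1)); last first.
  by move=> g Hg; rewrite (cardS_boxR (sub1 _ (set_mem Hg))).
rewrite [RHS](eq_bigr (fun h => \sum_(g : Tb d L | pb x L g \in D `&` lball (pb x (L + L') h) (L'%:R : R)) 1)); last first.
  by move=> h _; rewrite (cardS_boxR (sub3 _)).
rewrite big_mkcond [RHS]big_mkcond /=.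
under eq_bigr do rewrite big_mkcond /=.
under [RHS]eq_bigr do rewrite big_mkcond /=.
under eq_bigr do rewrite if_sum.
under [RHS]eq_bigr do rewrite if_sum.
rewrite exchange_big /=; apply: eq_bigr => h _; apply: eq_bigr => g _.
rewrite !in_setI (mem_set (pb_in (R:=R) x h)) /= (lball_symb (pb x L g)).
by case: (pb x L g \in D); case: (pb x (L + L') h \in U); case: (pb x L g \in lball (pb x (L + L') h) (L'%:R : R)).
Qed.

End Sums.

Section Real.
Variable R : realType.

Lemma powD_le (a b : R) n : 0 <= b -> b <= a ->
  a ^+ n.+1 - b ^+ n.+1 <= n.+1%:R * a ^+ n * (a - b).
Proof.
move=> b0 ba; elim: n => [|n IH]; first by rewrite !expr1 expr0; lra.
have a0 : 0 <= a by lra.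
have hb : b ^+ n.+1 <= a ^+ n.+1 by apply: lerXn2r; rewrite ?nnegrE.
have E : a ^+ n.+2 - b ^+ n.+2 = a * (a ^+ n.+1 - b ^+ n.+1) + b ^+ n.+1 * (a - b).
  by rewrite !exprS; ring.
rewrite E.
have h1 : a * (a ^+ n.+1 - b ^+ n.+1) <= a * (n.+1%:R * a ^+ n * (a - b)).
  by apply: ler_wpM2l.
have h2 : b ^+ n.+1 * (a - b) <= a ^+ n.+1 * (a - b).
  by apply: ler_wpM2r; lra.
have E2 : n.+2%:R * a ^+ n.+1 * (a - b) = a * (n.+1%:R * a ^+ n * (a - b)) + a ^+ n.+1 * (a - b).
  by rewrite exprS -[n.+2]addn1 natrD; ring.
rewrite E2; lra.
Qed.

Lemma ratio_lip (au av bu bv m K : R) :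
  0 < K -> K <= bu -> 0 < bv -> 0 <= av -> av <= bv ->
  `|au - av| <= m -> `|bu - bv| <= m ->
  `|au / bu - av / bv| <= 2 * m / K.
Proof.
move=> K0 Kb bv0 av0 avb ha hb.
have bu0 : 0 < bu by lra.
have E : au / bu - av / bv = ((au - av) * bv + av * (bv - bu)) / (bu * bv).
  by field; rewrite !gt_eqF.
rewrite E normrM normfV.
rewrite (gtr0_norm (mulr_gt0 bu0 bv0)).
rewrite ler_pdivrMr; last exact: mulr_gt0.
have h1 : `|(au - av) * bv + av * (bv - bu)| <= m * bv + av * m.
  apply: le_trans (ler_normD _ _) _; rewrite !normrM (gtr0_norm bv0) (ger0_norm av0).
  apply: lerD; first by apply: ler_wpM2r; lra.
  by apply: ler_wpM2l => //; rewrite distrC.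
have m0 : 0 <= m by apply: le_trans ha; exact: normr_ge0.
have h2 : m * bv + av * m <= 2 * m * bv by nra.
apply: (le_trans h1); apply: (le_trans h2).
have -> : 2 * m / K * (bu * bv) = 2 * m * bv * (bu / K) by field; lra.
rewrite -{1}[2 * m * bv]mulr1; apply: ler_wpM2l; first by nra.
by rewrite ler_pdivlMr // mul1r.
Qed.


Lemma kbound {al : R} : 0 < al -> al < 1 / 3 -> (1 + al) / (1 - al) ^+ 2 <= 3.
Proof.
move=> a0 a1; rewrite ler_pdivrMr; last by rewrite exprn_gt0 //; lra.
rewrite expr2; nra.
Qed.

Lemma final_upper (al eta T a b De NL L L' dn p : R) :
  0 < al -> al < 1 / 3 -> 0 < eta -> 0 < NL -> 0 < L -> 0 <= De ->
  (1 - al) * eta * NL <= b -> De * L <= dn * p * L' * NL ->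
  T <= (1 + al) / (1 - al) * (a + De) ->
  T / b <= (1 + al) / (1 - al) * (a / b) + 3 * dn * p / eta * (L' / L).
Proof.
move=> a0 a1 e0 N0 L0 D0 hb hD hT.
have K0 : 0 < (1 - al) * eta * NL by apply: mulr_gt0 => //; apply: mulr_gt0 => //; lra.
have b0 : 0 < b by lra.
have K1 : 0 <= (1 + al) / (1 - al) by apply: divr_ge0; lra.
apply: le_trans (_ : (1 + al) / (1 - al) * (a + De) / b <= _).
  by apply: ler_wpM2r => //; rewrite invr_ge0; lra.
have -> : (1 + al) / (1 - al) * (a + De) / b =
          (1 + al) / (1 - al) * (a / b) + (1 + al) / (1 - al) * De / b by ring.
apply: lerD => //.
apply: le_trans (_ : (1 + al) / (1 - al) * De / ((1 - al) * eta * NL) <= _).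
  apply: ler_wpM2l; first exact: mulr_ge0.
  by rewrite lef_pV2 ?posrE.
have Z0 : 0 < eta * NL * L by apply: mulr_gt0 => //; apply: mulr_gt0.
have -> : (1 + al) / (1 - al) * De / ((1 - al) * eta * NL) =
   ((1 + al) / (1 - al) ^+ 2) * (De * L) / (eta * NL * L).
  by field; rewrite !gt_eqF //; lra.
have -> : 3 * dn * p / eta * (L' / L) = 3 * (dn * p * L' * NL) / (eta * NL * L).
  by field; rewrite !gt_eqF.
apply: ler_wpM2r; first by rewrite invr_ge0; apply: ltW.
have k3 := kbound a0 a1.
have k0 : 0 <= (1 + al) / (1 - al) ^+ 2 by apply: divr_ge0; [lra | apply: sqr_ge0].
have X0 : 0 <= De * L by apply: mulr_ge0 => //; apply: ltW.
apply: le_trans (_ : 3 * (De * L) <= _); last by lra.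
by apply: ler_wpM2r.
Qed.

Lemma final_lower (al eta T a b De NL L L' dn p : R) :
  0 < al -> al < 1 / 3 -> 0 < eta -> 0 < NL -> 0 < L -> 0 <= De ->
  (1 - al) * eta * NL <= b -> De * L <= dn * p * L' * NL ->
  (1 - al) / (1 + al) * (a - De) <= T ->
  (1 - al) / (1 + al) * (a / b) - 3 * dn * p / eta * (L' / L) <= T / b.
Proof.
move=> a0 a1 e0 N0 L0 D0 hb hD hT.
have K0 : 0 < (1 - al) * eta * NL by apply: mulr_gt0 => //; apply: mulr_gt0 => //; lra.
have b0 : 0 < b by lra.
have K2 : 0 <= (1 - al) / (1 + al) by apply: divr_ge0; lra.
apply: le_trans (_ : (1 - al) / (1 + al) * (a - De) / b <= _); last first.
  by apply: ler_wpM2r => //; rewrite invr_ge0; lra.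
have -> : (1 - al) / (1 + al) * (a - De) / b =
          (1 - al) / (1 + al) * (a / b) - (1 - al) / (1 + al) * De / b by ring.
rewrite lerD2l lerN2.
apply: le_trans (_ : (1 - al) / (1 + al) * De / ((1 - al) * eta * NL) <= _).
  apply: ler_wpM2l; first exact: mulr_ge0.
  by rewrite lef_pV2 ?posrE.
have Z0 : 0 < eta * NL * L by apply: mulr_gt0 => //; apply: mulr_gt0.
have -> : (1 - al) / (1 + al) * De / ((1 - al) * eta * NL) =
   (1 + al)^-1 * (De * L) / (eta * NL * L).
  by field; rewrite !gt_eqF //; lra.
have -> : 3 * dn * p / eta * (L' / L) = 3 * (dn * p * L' * NL) / (eta * NL * L).
  by field; rewrite !gt_eqF.
apply: ler_wpM2r; first by rewrite invr_ge0; apply: ltW.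
have k1 : (1 + al)^-1 <= 1 by rewrite invf_le1; lra.
have k0 : 0 <= (1 + al)^-1 by rewrite invr_ge0; lra.
have X0 : 0 <= De * L by apply: mulr_ge0 => //; apply: ltW.
apply: le_trans (_ : 3 * (De * L) <= _); last by lra.
apply: le_trans (_ : 1 * (De * L) <= _); last by lra.
by apply: ler_wpM2r.
Qed.


Lemma dN_up (L L' n : nat) : (L' <= L)%N ->
  ((((L + L').*2.+1)%:R : R) ^+ n.+1 - ((L.*2.+1)%:R) ^+ n.+1) * L%:R
  <= n.+1%:R * 2 ^+ n * L'%:R * ((L.*2.+1)%:R) ^+ n.+1.
Proof.
move=> LL.
have ea : (((L + L').*2.+1)%:R : R) = 2 * L%:R + 2 * L'%:R + 1.
  by rewrite -addn1 -mul2n natrD natrM ?natrD; ring.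
have eb : (((L).*2.+1)%:R : R) = 2 * L%:R + 1.
  by rewrite -addn1 -mul2n natrD natrM ?natrD; ring.
have hL : (L'%:R : R) <= L%:R by rewrite ler_nat.
have L0 : (0 : R) <= L'%:R by [].
rewrite ea eb; set A := 2 * L%:R + 2 * L'%:R + 1; set B := 2 * (L%:R : R) + 1.
have B0 : 0 <= B by rewrite /B; lra.
have BA : B <= A by rewrite /A /B; lra.
have h1 := @powD_le A B n B0 BA.
have h2 : A ^+ n <= 2 ^+ n * B ^+ n.
  rewrite -exprMn; apply: lerXn2r; rewrite ?nnegrE /A /B; lra.
have Ln0 : (0 : R) <= L%:R by [].
have hAB : A - B = 2 * L'%:R by rewrite /A /B; ring.
apply: le_trans (_ : (n.+1%:R * A ^+ n * (A - B)) * L%:R <= _).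
  by apply: ler_wpM2r.
rewrite hAB.
have Bn0 : 0 <= B ^+ n by apply: exprn_ge0.
have An0 : 0 <= A ^+ n by apply: exprn_ge0; lra.
have n0 : (0 : R) <= n.+1%:R by [].
have p0 : (0 : R) <= 2 ^+ n by apply: exprn_ge0.
apply: le_trans (_ : n.+1%:R * (2 ^+ n * B ^+ n) * (2 * L'%:R) * L%:R <= _).
  apply: ler_wpM2r => //; apply: ler_wpM2r; first lra.
  by apply: ler_wpM2l.
rewrite exprS.
have -> : n.+1%:R * (2 ^+ n * B ^+ n) * (2 * L'%:R) * L%:R =
          (n.+1%:R * 2 ^+ n * L'%:R * B ^+ n) * (2 * L%:R) by ring.
have -> : n.+1%:R * 2 ^+ n * L'%:R * (B * B ^+ n) =
          (n.+1%:R * 2 ^+ n * L'%:R * B ^+ n) * B by ring.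
apply: ler_wpM2l; last by rewrite /B; lra.
by apply: mulr_ge0 => //; apply: mulr_ge0 => //; apply: mulr_ge0.
Qed.

Lemma dN_low (L L' n : nat) : (L' <= L)%N ->
  (((L.*2.+1)%:R : R) ^+ n.+1 - (((L - L').*2.+1)%:R) ^+ n.+1) * L%:R
  <= n.+1%:R * 2 ^+ n * L'%:R * ((L.*2.+1)%:R) ^+ n.+1.
Proof.
move=> LL.
have ea : (((L - L').*2.+1)%:R : R) = 2 * L%:R - 2 * L'%:R + 1.
  by rewrite -addn1 -mul2n natrD natrM natrB //; ring.
have eb : (((L).*2.+1)%:R : R) = 2 * L%:R + 1.
  by rewrite -addn1 -mul2n natrD natrM ?natrD; ring.
have hL : (L'%:R : R) <= L%:R by rewrite ler_nat.
have L0 : (0 : R) <= L'%:R by [].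
rewrite ea eb; set A := 2 * L%:R - 2 * L'%:R + 1; set B := 2 * (L%:R : R) + 1.
have A0 : 0 <= A by rewrite /A; lra.
have BA : A <= B by rewrite /A /B; lra.
have h1 := @powD_le B A n A0 BA.
have Ln0 : (0 : R) <= L%:R by [].
have hAB : B - A = 2 * L'%:R by rewrite /A /B; ring.
apply: le_trans (_ : (n.+1%:R * B ^+ n * (B - A)) * L%:R <= _).
  by apply: ler_wpM2r.
rewrite hAB.
have Bn0 : 0 <= B ^+ n by apply: exprn_ge0; rewrite /B; lra.
have n0 : (0 : R) <= n.+1%:R by [].
have p1 : (1 : R) <= 2 ^+ n by apply: exprn_ege1; lra.
rewrite exprS.
have -> : n.+1%:R * B ^+ n * (2 * L'%:R) * L%:R =
          (n.+1%:R * 1 * L'%:R * B ^+ n) * (2 * L%:R) by ring.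
have -> : n.+1%:R * 2 ^+ n * L'%:R * (B * B ^+ n) =
          (n.+1%:R * 2 ^+ n * L'%:R * B ^+ n) * B by ring.
have X0 : 0 <= n.+1%:R * 1 * L'%:R * B ^+ n.
  by apply: mulr_ge0 => //; apply: mulr_ge0 => //; apply: mulr_ge0.
apply: le_trans (_ : (n.+1%:R * 1 * L'%:R * B ^+ n) * B <= _).
  by apply: ler_wpM2l => //; rewrite /B; lra.
apply: ler_wpM2r; first by rewrite /B; lra.
apply: ler_wpM2r => //; apply: ler_wpM2r => //; apply: ler_wpM2l => //.
Qed.

End Real.

Set Implicit Arguments. Unset Strict Implicit. Unset Printing Implicit Defensive.
Section Dens.
Variables (d : nat) (R : realType).

Lemma rscale_mono (k D a b : R) : 0 < k -> 0 < D -> 1 <= a -> a <= b ->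
  rscale k D a <= rscale k D b.
Proof.
move=> k0 D0 a1 ab; rewrite /rscale ler_expR ler_pM2l //.
apply: ge0_ler_powR; first lra.
- by rewrite nnegrE; apply: ln_ge0.
- by rewrite nnegrE; apply: ln_ge0; lra.
- by rewrite ler_ln ?posrE //; lra.
Qed.

Lemma lball_half (c : pt d) (M : nat) :
  lball c ((M%:R + 1 / 2 : R)) = lball c (M%:R : R).
Proof.
apply/seteqP; split => y; rewrite /lball /=.
  move=> H; rewrite ler_nat; apply: contraTT H; rewrite -ltnNge -ltNge => H.
  have : ((M.+1)%:R : R) <= (normi (y - c))%:R by rewrite ler_nat.
  rewrite -addn1 natrD; lra.
move=> H; lra.
Qed.

Lemma dens_count (om : config d) (eta al k D : R) (M : nat) (z : pt d) :
  dens_good om eta al k D (M%:R) -> Sinf om z -> lball 0 (rscale k D M%:R) z ->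
  (1 - al) * eta * ((M.*2.+1 ^ d)%N%:R) <= (cardS (Sinf om `&` lball z (M%:R : R)))%:R
  <= (1 + al) * eta * ((M.*2.+1 ^ d)%N%:R).
Proof.
move=> H Sz Bz; have := H z Sz Bz; rewrite cardS_ball => /andP [h1 h2].
have N0 : (0 : R) < ((M.*2.+1 ^ d)%N)%:R by rewrite ltr0n expn_gt0.
by apply/andP; split; [rewrite -ler_pdivlMr | rewrite -ler_pdivrMr].
Qed.


Lemma adj_sym (u v : pt d) : adj u v -> adj v u.
Proof.
rewrite /adj => H; rewrite (eq_bigr (fun i => absz (u ord0 i - v ord0 i))) //.
by move=> i _; move: (u ord0 i) (v ord0 i) => p q; lia.
Qed.

Lemma dist_nat (a b m : nat) : (a <= b + m)%N -> (b <= a + m)%N ->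
  `|(a%:R : R) - b%:R| <= m%:R.
Proof.
rewrite -(ler_nat R) -(ler_nat R (b)) !natrD => h1 h2.
by rewrite ler_distl; apply/andP; split; lra.
Qed.

Lemma div_le_K (a b K : R) : 0 <= a -> 0 < K -> K <= b -> a / b <= a / K.
Proof.
move=> a0 K0 Kb; apply: ler_wpM2l => //.
by rewrite lef_pV2 ?posrE //; apply: lt_le_trans Kb.
Qed.

Lemma div_ge_K (a b K : R) : 0 <= a -> 0 < b -> b <= K -> a / K <= a / b.
Proof.
move=> a0 b0 bK; apply: ler_wpM2l => //.
by rewrite lef_pV2 ?posrE //; apply: lt_le_trans bK.
Qed.

Lemma nb_final (al eta m B L : R) : 0 < al -> al < 1 / 3 -> 0 < eta -> 0 < m ->
  0 < L -> B = 2 * L + 1 -> 2 * m / ((1 - al) * eta * (m * B)) <= 6 * L^-1 / eta.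
Proof.
move=> a0 a1 e0 m0 L0 ->.
have -> : 2 * m / ((1 - al) * eta * (m * (2 * L + 1))) = 2 / ((1 - al) * eta * (2 * L + 1)).
  by field; rewrite !gt_eqF //; lra.
have P : 0 < (1 - al) * eta * (2 * L + 1).
  by apply: mulr_gt0; [apply: mulr_gt0 => //; lra | lra].
rewrite ler_pdivrMr //.
have -> : 6 * L^-1 / eta * ((1 - al) * eta * (2 * L + 1)) = 6 * (1 - al) * (2 * L + 1) / L.
  by field; rewrite !gt_eqF.
rewrite ler_pdivlMr //.
have h : 4 * (2 * L + 1) <= 6 * (1 - al) * (2 * L + 1).
  by apply: ler_wpM2r; lra.
lra.
Qed.


Lemma le_rB (a b c r : R) : r <= b + c -> a - b - c + r <= a.
Proof. move=> h; lra. Qed.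

Lemma le_rB2 (a b c : R) : 0 <= b -> 0 <= c -> a - b - c <= a.
Proof. move=> h1 h2; lra. Qed.


Lemma tup_aux (al eta N' C a NL NLL : R) : 0 < 1 - al -> 0 < 1 + al -> 0 < eta ->
  0 < N' -> C + NL <= a + NLL ->
  (1 + al) * eta * N' * C / ((1 - al) * eta * N') <= (1 + al) / (1 - al) * (a + (NLL - NL)).
Proof.
move=> h1 h2 e0 N0 hC.
have -> : (1 + al) * eta * N' * C / ((1 - al) * eta * N') = (1 + al) / (1 - al) * C.
  by field; rewrite !gt_eqF.
apply: ler_wpM2l; first by apply: divr_ge0; apply: ltW.
lra.
Qed.

Lemma tlow_aux (al eta N' C a NL NLm : R) : 0 < 1 - al -> 0 < 1 + al -> 0 < eta ->
  0 < N' -> a + NLm <= C + NL ->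
  (1 - al) / (1 + al) * (a - (NL - NLm)) <= (1 - al) * eta * N' * C / ((1 + al) * eta * N').
Proof.
move=> h1 h2 e0 N0 hC.
have -> : (1 - al) * eta * N' * C / ((1 + al) * eta * N') = (1 - al) / (1 + al) * C.
  by field; rewrite !gt_eqF.
apply: ler_wpM2l; first by apply: divr_ge0; apply: ltW.
lra.
Qed.

End Dens.

Unset Implicit Arguments.

Theorem lemma4p3 (R : realType) (d : nat) (eta alpha kappa Delta : R)
  (om : config d) (U0 : set (pt d)) (l l' : nat) :
  (3 <= d)%N -> 0 < eta -> 0 < kappa -> 0 < Delta ->
  0 < alpha -> alpha < 1 / 3 ->
  (exists x, Sinf om x) ->
  (forall x y, Sinf om x -> Sinf om y -> connected_in (Sinf om) x y) ->
  (Rden om eta alpha kappa Delta < +oo)%E ->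
  U0 `<=` Sinf om ->
  (l' < l)%N ->
  (Rden om eta alpha kappa Delta <= (2 ^+ l' : R)%:E)%E ->
  0 < rscale kappa Delta (2 ^+ l') - 2 ^+ l - 2 ^+ l' ->
  (forall x y : pt d,
     let A := Sinf om `&` lball 0 (rscale kappa Delta (2 ^+ l)) in
     A x -> A (x + y) -> connected_in A x (x + y) ->
     ((`|sigma om U0 l x - sigma om U0 l (x + y)%R|)%:E
        <= (6 * (2 ^+ l)^-1 / eta)%:E * gdist A x (x + y)%R)%E)
  /\
  (forall x : pt d,
     Sinf om x -> lball 0 (rscale kappa Delta (2 ^+ l') - 2 ^+ l - 2 ^+ l') x ->
     let c0 := 3 * d%:R * 2 ^+ d.-1 / eta in
     let s := sigma om U0 l x in
     let a := avg om (sigma om U0 l') x l in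
     (1 - alpha) / (1 + alpha) * s - c0 * (2 ^+ l' / 2 ^+ l) <= a
       <= (1 + alpha) / (1 - alpha) * s + c0 * (2 ^+ l' / 2 ^+ l)).
Proof.
move=> d3 eta0 kap0 Del0 al0 al13 _ _ _ U0S ll' Rle rpos.
have oma : 0 < 1 - alpha by lra.
have opa : 0 < 1 + alpha by lra.
have U1S : U1 om U0 `<=` Sinf om by move=> z [].
have d0 : (0 < d)%N by lia.
set L := (2 ^ l)%N. set L' := (2 ^ l')%N.
have eL : (2 ^+ l : R) = L%:R by rewrite /L natrX.
have eL' : (2 ^+ l' : R) = L'%:R by rewrite /L' natrX.
have L'1 : (1 <= L')%N by rewrite /L' expn_gt0.
have LL' : (L'.*2 <= L)%N by rewrite /L /L' -mul2n -expnS leq_pexp2l.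
have L'L : (L' <= L)%N by lia.
have L1 : (1 <= L)%N by lia.
have L'1R : (1 : R) <= L'%:R by rewrite ler1n.
have LL'R : (L'%:R : R) <= L%:R by rewrite ler_nat.
have dgood : forall Rr, L'%:R + 1/2 <= Rr -> dens_good om eta alpha kappa Delta Rr.
  have : (Rden om eta alpha kappa Delta < (L'%:R + 1/2)%:E)%E.
    apply: le_lt_trans Rle _; rewrite eL' lte_fin; lra.
  rewrite /Rden => /ereal_inf_lt [_ [R0 [R01 HR0] <-]]; rewrite lte_fin => R0lt Rr HRr.
  apply: HR0; lra.
have dL : dens_good om eta alpha kappa Delta (L%:R).
  apply: dgood; have : ((L'.*2)%:R : R) <= L%:R by rewrite ler_nat.
  rewrite -mul2n natrM; lra.
have dL' : dens_good om eta alpha kappa Delta (L'%:R).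
  move=> z Sz Bz; have := dgood (L'%:R + 1/2) (lexx _) z Sz; rewrite lball_half; apply.
  rewrite /lball /= in Bz *; apply: le_trans Bz _; apply: rscale_mono => //; lra.
split.
  move=> x y A Ax Axy [n Hw].
  have NL0 : (0 : R) < ((L.*2.+1 ^ d)%N)%:R by rewrite ltr0n expn_gt0.
  set c := 6 * (2 ^+ l)^-1 / eta.
  have c0 : 0 < c.
    rewrite /c eL; apply: divr_gt0 => //; apply: mulr_gt0 => //.
    by rewrite invr_gt0 ltr0n.
  have nb : forall u v, A u -> A v -> adj u v ->
      `|sigma om U0 l u - sigma om U0 l v| <= c.
    move=> u v [Su Bu] [Sv Bv] auv.
    rewrite eL in Bu Bv.
    rewrite /sigma /c eL.
    set m := (L.*2.+1 ^ d.-1)%N.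
    have hu := dens_count dL Su Bu; have hv := dens_count dL Sv Bv.
    rewrite [Sinf om `&` _]setIC in hu; rewrite [Sinf om `&` _]setIC in hv.
    move/andP: hu => [hu _]; move/andP: hv => [hv _].
    have K0 : 0 < (1 - alpha) * eta * ((L.*2.+1 ^ d)%N)%:R by rewrite !mulr_gt0.
    have vsub : lball v (L%:R : R) `&` Sinf om `<=` lball v (L%:R : R) by move=> z [].
    apply: le_trans (ratio_lip (m := m%:R) K0 hu _ _ _ _ _) _.
    - exact: lt_le_trans hv.
    - exact: ler0n.
    - rewrite ler_nat.
      have sub' : lball v (L%:R : R) `&` U1 om U0 `<=` lball v (L%:R : R) `&` Sinf om.
        by move=> z [Bz Uz]; split; [exact: Bz | exact: (U1S z Uz)].
      exact: (cardS_le vsub sub').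
    - apply: dist_nat; first exact: slab.
      by apply: slab; apply: adj_sym.
    - apply: dist_nat; first exact: slab.
      by apply: slab; apply: adj_sym.
    have eN : ((L.*2.+1 ^ d)%N%:R : R) = m%:R * (L.*2.+1)%:R.
      by rewrite -natrM /m -expnSr prednK.
    rewrite eN; apply: nb_final => //.
    - by rewrite ltr0n expn_gt0.
    - by rewrite ltr0n.
    - by rewrite -addn1 -mul2n natrD natrM.
  have wk : forall p x0, path (@adj d) x0 p -> (forall z, z \in x0 :: p -> A z) ->
      `|sigma om U0 l x0 - sigma om U0 l (last x0 p)| <= c * (size p)%:R.
    elim => [|y0 p IH] x0 /=; first by rewrite subrr normr0 mulr0.
    move=> /andP [a1 hp] HA.
    have Ax0 : A x0 by apply: HA; rewrite mem_head.
    have Ay0 : A y0 by apply: HA; rewrite in_cons mem_head orbT.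
    have HA' : forall z, z \in y0 :: p -> A z.
      by move=> z hz; apply: HA; rewrite in_cons hz orbT.
    have h2 := IH y0 hp HA'.
    have h1 := nb _ _ Ax0 Ay0 a1.
    apply: le_trans (ler_distD (sigma om U0 l y0) _ _) _.
    rewrite -addn1 natrD mulrDr mulr1; lra.
  have key : forall m, walk A x (x + y) m ->
      `|sigma om U0 l x - sigma om U0 l (x + y)| <= c * m%:R.
    move=> m [p [sz hp hl hA]]; rewrite -sz -hl; exact: wk.
  rewrite /gdist.
  have H : ((`|sigma om U0 l x - sigma om U0 l (x + y)| / c)%:E <=
      ereal_inf [set ((n%:R : R))%:E | n in [set n | walk A x (x + y)%R n]])%E.
    apply: le_ereal_inf_tmp => _ [m Hm <-]; rewrite lee_fin ler_pdivrMr // mulrC.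
    exact: key.
  apply: le_trans (lee_wpmul2l _ H); last by rewrite lee_fin ltW.
  by rewrite -EFinM [c * _]mulrC divfK ?gt_eqF.
move=> x Sx Bx; cbv zeta.
rewrite /avg /sigma eL eL'.
rewrite eL eL' in Bx.
set D := lball x (L%:R : R) `&` Sinf om.
set T := (\sum_(y \in D) _).
set ax := cardS (lball x (L%:R : R) `&` U1 om U0).
set N' := (((L'.*2.+1 ^ d)%N)%:R : R).
set NL := (((L.*2.+1 ^ d)%N)%:R : R).
have N'0 : 0 < N' by rewrite ltr0n expn_gt0.
have NL0 : 0 < NL by rewrite ltr0n expn_gt0.
have DB : D `<=` lball x (L%:R : R) by move=> z [].
have rB : forall (r : nat) z, (r <= L + L')%N -> lball x (r%:R : R) z ->
    lball 0 (rscale kappa Delta L'%:R) z.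
  move=> r z hr hz; have := lball_trans Bx hz; rewrite /lball /= => h; apply: le_trans h _.
  by apply: le_rB; rewrite -natrD ler_nat.
have rsc : rscale kappa Delta L'%:R <= rscale kappa Delta L%:R by apply: rscale_mono.
have Bx' : lball 0 (rscale kappa Delta L%:R) x.
  move: Bx; rewrite /lball /= => h; apply: le_trans h _.
  apply: le_trans (le_rB2 _ (ler0n _ _) (ler0n _ _)) rsc.
have hx := dens_count dL Sx Bx'; rewrite [Sinf om `&` _]setIC in hx.
move/andP: hx => [hx _].
have K10 : 0 < (1 - alpha) * eta * N' by rewrite !mulr_gt0.
have K20 : 0 < (1 + alpha) * eta * N' by rewrite !mulr_gt0.
have sgb : forall y, D y ->
    (1 - alpha) * eta * N' <= (cardS (lball y (L'%:R : R) `&` Sinf om))%:R <=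
    (1 + alpha) * eta * N'.
  move=> y [By Sy]; have := dens_count dL' Sy (rB L y (leq_addr _ _) By).
  by rewrite setIC.
have DLz : forall z, D `&` lball z (L'%:R : R) `<=` Sinf om `&` lball z (L'%:R : R).
  by move=> z w [[Bw Sw] Lw].
have sub2 : lball x ((L + L')%:R : R) `&` U1 om U0 `<=` lball x ((L + L')%:R : R)
  by move=> z [].
have Tup : T <= (1 + alpha) / (1 - alpha) *
    (ax%:R + ((((L + L').*2.+1 ^ d)%N)%:R - NL)).
  have s1 : T <= \sum_(y \in D) ((cardS (lball y (L'%:R : R) `&` U1 om U0))%:R /
                               ((1 - alpha) * eta * N')).
    apply: (fs_le (c:=x) (M:=L) DB) => y Dy.
    have /andP [h1 _] := sgb y Dy.
    by apply: div_le_K.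
  apply: le_trans s1 _.
  rewrite -mulr_fsuml (dc L' (U1 om U0) DB).
  have s2 : \sum_(z \in lball x ((L + L')%:R : R) `&` U1 om U0)
              ((cardS (D `&` lball z (L'%:R : R)))%:R : R) <=
            \sum_(z \in lball x ((L + L')%:R : R) `&` U1 om U0) ((1 + alpha) * eta * N').
    apply: (fs_le (c:=x) (M:=L+L') sub2) => z [Bz Uz].
    have Sz := U1S z Uz.
    have /andP [_ h] := dens_count dL' Sz (rB _ z (leqnn _) Bz).
    apply: le_trans h; rewrite ler_nat.
    have sub3 : Sinf om `&` lball z (L'%:R : R) `<=` lball z (L'%:R : R) by move=> w [].
    exact: (cardS_le sub3 (DLz z)).
  apply: le_trans (ler_wpM2r _ s2) _; first by rewrite invr_ge0 ltW.
  rewrite (fs_const _ sub2).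
  have P12 : lball x (L%:R : R) `<=` lball x ((L + L')%:R : R).
    by move=> w; rewrite /lball /= => h; apply: le_trans h _; rewrite ler_nat leq_addr.
  have sh := cardS_shell (U1 om U0) (@subset_refl _ (lball x ((L + L')%:R : R))) P12.
  rewrite !cardS_ball in sh.
  apply: tup_aux => //.
  by rewrite -!natrD ler_nat.
have Tlow : (1 - alpha) / (1 + alpha) *
    (ax%:R - (NL - ((((L - L').*2.+1 ^ d)%N)%:R))) <= T.
  have s1 : \sum_(y \in D) ((cardS (lball y (L'%:R : R) `&` U1 om U0))%:R /
                               ((1 + alpha) * eta * N')) <= T.
    apply: (fs_le (c:=x) (M:=L) DB) => y Dy.
    have /andP [h1 h2] := sgb y Dy.
    by apply: div_ge_K => //; apply: lt_le_trans h1.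
  apply: le_trans s1.
  rewrite -mulr_fsuml (dc L' (U1 om U0) DB).
  have sub4 : lball x ((L - L')%:R : R) `&` U1 om U0 `<=`
              lball x ((L + L')%:R : R) `&` U1 om U0.
    move=> w [h u]; split => //; move: h; rewrite /lball /= => h; apply: le_trans h _.
    by rewrite ler_nat (leq_trans (leq_subr _ _) (leq_addr _ _)).
  have sub24 := subset_trans sub4 sub2.
  have s2 : \sum_(z \in lball x ((L - L')%:R : R) `&` U1 om U0) ((1 - alpha) * eta * N') <=
            \sum_(z \in lball x ((L + L')%:R : R) `&` U1 om U0)
              ((cardS (D `&` lball z (L'%:R : R)))%:R : R).
    apply: le_trans (fs_sub sub2 sub4 (fun z _ => ler0n _ _)).
    apply: (fs_le (c:=x) (M:=L+L') sub24) => z [Bz Uz].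
    have Sz := U1S z Uz.
    have /andP [h _] := dens_count dL' Sz
      (rB _ z (leq_trans (leq_subr _ _) (leq_addr _ _)) Bz).
    apply: le_trans h _; rewrite ler_nat.
    have sub5 : D `&` lball z (L'%:R : R) `<=` lball z (L'%:R : R) by move=> w [].
    apply: (cardS_le sub5) => w [Sw Lw]; split => //; split => //.
    have := lball_trans Bz Lw; rewrite -natrD subnK //.
  apply: le_trans (ler_wpM2r _ s2); last by rewrite invr_ge0 ltW.
  rewrite (fs_const _ sub24).
  have P12 : lball x ((L - L')%:R : R) `<=` lball x (L%:R : R).
    by move=> w; rewrite /lball /= => h; apply: le_trans h _; rewrite ler_nat leq_subr.
  have sh := cardS_shell (U1 om U0) (@subset_refl _ (lball x (L%:R : R))) P12.
  rewrite !cardS_ball in sh.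
  apply: tlow_aux => //.
  by rewrite -!natrD ler_nat.
have dpr : d = d.-1.+1 by rewrite prednK.
apply/andP; split.
  apply: (final_lower (NL := NL) (De := NL - ((((L - L').*2.+1 ^ d)%N)%:R))) => //.
  - by rewrite ltr0n.
  - by rewrite subr_ge0 /NL ler_nat leq_exp2r // ltnS leq_double leq_subr.
  - have := @dN_low R L L' d.-1 L'L; rewrite -dpr -!natrX; exact.
apply: (final_upper (NL := NL) (De := (((L + L').*2.+1 ^ d)%N)%:R - NL)) => //.
- by rewrite ltr0n.
- by rewrite subr_ge0 /NL ler_nat leq_exp2r // ltnS leq_double leq_addr.
- have := @dN_up R L L' d.-1 L'L; rewrite -dpr -!natrX; exact.
Qed.
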